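(* There exists a non-empty open set $\mathcal{U}_1\subset(0,\infty)^5$ of parameter values $(A,r,\beta_0,a,\mu)$ such that, for every parameter value in $\mathcal{U}_1$, the system $$\dot S = S(A-S)-\beta_0 IS,\qquad \dot I=\beta_0 IS-\mu I-\frac{rI}{a+I}$$ satisfies $\mathcal{R}_0=\dfrac{\beta_0A}{\mu+\frac{r}{a}}<1$ and its flow has exactly two endemic equilibria, one of which is a sink and the other a saddle.
   Context: The system is an autonomous planar ODE in the variables $S$ (susceptible) and $I$ (infectious), considered on the closed quadrant $S,I\ge 0$, with positive parameters $A,r,\beta_0,a,\mu$; here $\mu$ denotes the total death rate of infectious individuals (natural death rate plus disease-induced death rate). The quantity $\mathcal{R}_0=\beta_0A/(\mu+r/a)$ is called the basic reproduction number. An endemic equilibrium is an equilibrium (zero of the vector field) with $I\neq 0$; the equilibria with $I=0$, namely $(0,0)$ and $(A,0)$, are the disease-free equilibria. A sink is an equilibrium whose Jacobian eigenvalues all have negative real part; a saddle is an equilibrium whose Jacobian has two real eigenvalues of opposite signs. *)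

(* Defs.v *)
From Stdlib Require Import Reals Lra.
From Coquelicot Require Import Coquelicot.
Open Scope R_scope.

(* Vector field of the SI model; parameters (A, r, b = beta_0, a, mu). *)
Definition fS (A r b a mu : R) (S I : R) : R := S * (A - S) - b * I * S.
Definition fI (A r b a mu : R) (S I : R) : R := b * I * S - mu * I - r * I / (a + I).

Definition basic_repro (A r b a mu : R) : R := b * A / (mu + r / a).

Definition is_equilibrium (A r b a mu : R) (S I : R) : Prop :=
  0 <= S /\ 0 <= I /\ fS A r b a mu S I = 0 /\ fI A r b a mu S I = 0.

Definition is_endemic_equilibrium (A r b a mu : R) (S I : R) : Prop :=
  is_equilibrium A r b a mu S I /\ I <> 0.

Definition J11 A r b a mu S I := Derive (fun s => fS A r b a mu s I) S.
Definition J12 A r b a mu S I := Derive (fun i => fS A r b a mu S i) I.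
Definition J21 A r b a mu S I := Derive (fun s => fI A r b a mu s I) S.
Definition J22 A r b a mu S I := Derive (fun i => fI A r b a mu S i) I.

Definition jac_eigenvalue A r b a mu S I (l : C) : Prop :=
  Cminus (Cmult (Cminus (RtoC (J11 A r b a mu S I)) l)
                (Cminus (RtoC (J22 A r b a mu S I)) l))
         (RtoC (J12 A r b a mu S I * J21 A r b a mu S I)) = RtoC 0.

Definition is_sink A r b a mu S I : Prop :=
  forall l : C, jac_eigenvalue A r b a mu S I l -> Re l < 0.

Definition is_saddle A r b a mu S I : Prop :=
  exists l1 l2 : R, l1 < 0 /\ 0 < l2 /\
    jac_eigenvalue A r b a mu S I (RtoC l1) /\
    jac_eigenvalue A r b a mu S I (RtoC l2).

Definition open5 (U : R -> R -> R -> R -> R -> Prop) : Prop :=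
  forall x1 x2 x3 x4 x5, U x1 x2 x3 x4 x5 ->
    exists eps, 0 < eps /\
      forall y1 y2 y3 y4 y5,
        Rabs (y1 - x1) < eps -> Rabs (y2 - x2) < eps -> Rabs (y3 - x3) < eps ->
        Rabs (y4 - x4) < eps -> Rabs (y5 - x5) < eps ->
        U y1 y2 y3 y4 y5.

(* Main.v *)
Require Import Defs.
From Stdlib Require Import Reals Lra Psatz.
From Coquelicot Require Import Coquelicot.
Open Scope R_scope.
Lemma J11_eq A r b a mu S I : J11 A r b a mu S I = A - 2*S - b*I.
Proof. unfold J11, fS. apply is_derive_unique. auto_derive; [auto | ring]. Qed.
Lemma J12_eq A r b a mu S I : J12 A r b a mu S I = - b*S.
Proof. unfold J12, fS. apply is_derive_unique. auto_derive; [auto | ring]. Qed.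
Lemma J21_eq A r b a mu S I : J21 A r b a mu S I = b*I.
Proof. unfold J21, fI. apply is_derive_unique. auto_derive; [auto | ring]. Qed.
Lemma J22_eq A r b a mu S I : a + I <> 0 -> J22 A r b a mu S I = b*S - mu - r*a/((a+I)*(a+I)).
Proof. intros H. unfold J22, fI. apply is_derive_unique. auto_derive; [auto | field; auto]. Qed.

Lemma jac_at A r b a mu S I : 0 < a -> 0 < I -> S = A - b*I -> (b*S - mu)*(a+I) = r ->
  J11 A r b a mu S I + J22 A r b a mu S I = -S + (b*S - mu)*I/(a+I) /\
  J11 A r b a mu S I * J22 A r b a mu S I - J12 A r b a mu S I * J21 A r b a mu S I
   = S*I*(2*(b*b)*I - (b*A - mu - b*b*a))/(a+I).
Proof.
intros Ha HI HS Hr.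
assert (Hai : a + I <> 0) by lra.
rewrite J11_eq, J12_eq, J21_eq, J22_eq by auto.
subst r. split; subst S; field; auto.
Qed.
Lemma eig_parts j11 j12 j21 j22 x y :
  Cminus (Cmult (Cminus (RtoC j11) (x,y)) (Cminus (RtoC j22) (x,y))) (RtoC (j12*j21)) = RtoC 0 ->
  (j11 - x)*(j22 - x) - y*y - j12*j21 = 0 /\ y * (j11 + j22 - 2*x) = 0.
Proof.
intros H. unfold Cminus, Cmult, Cplus, Copp, RtoC in H. simpl in H.
injection H; intros H1 H2. split; nra.
Qed.
Lemma eig_real j11 j12 j21 j22 l :
  (j11 - l)*(j22 - l) - j12*j21 = 0 ->
  Cminus (Cmult (Cminus (RtoC j11) (RtoC l)) (Cminus (RtoC j22) (RtoC l))) (RtoC (j12*j21)) = RtoC 0.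
Proof.
intros H. unfold Cminus, Cmult, Cplus, Copp, RtoC. simpl.
apply injective_projections; simpl; nra.
Qed.
Lemma sink_gen j11 j12 j21 j22 (l : C) :
  j11 + j22 < 0 -> j11*j22 - j12*j21 > 0 ->
  Cminus (Cmult (Cminus (RtoC j11) l) (Cminus (RtoC j22) l)) (RtoC (j12*j21)) = RtoC 0 ->
  Re l < 0.
Proof.
destruct l as [x y]. intros HT HD H. apply eig_parts in H as [H1 H2].
unfold Re; simpl.
destruct (Req_dec y 0) as [->|Hy].
- destruct (Rlt_or_le x 0); auto. nra.
- assert (j11 + j22 - 2*x = 0).
  { apply Rmult_eq_reg_l with y; auto; lra. }
  lra.
Qed.
Lemma saddle_gen j11 j12 j21 j22 :
  j11*j22 - j12*j21 < 0 ->
  exists l1 l2 : R, l1 < 0 /\ 0 < l2 /\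
  Cminus (Cmult (Cminus (RtoC j11) (RtoC l1)) (Cminus (RtoC j22) (RtoC l1))) (RtoC (j12*j21)) = RtoC 0 /\
  Cminus (Cmult (Cminus (RtoC j11) (RtoC l2)) (Cminus (RtoC j22) (RtoC l2))) (RtoC (j12*j21)) = RtoC 0.
Proof.
intros HD.
set (T := j11 + j22). set (Dt := j11*j22 - j12*j21).
assert (Hpos : 0 <= T*T - 4*Dt) by (unfold Dt; nra).
set (sq := sqrt (T*T - 4*Dt)).
assert (Hsq : sq * sq = T*T - 4*Dt) by (apply sqrt_sqrt; auto).
assert (Hsq0 : 0 <= sq) by apply sqrt_pos.
assert (Hgt : T < sq /\ -T < sq).
{ split.
  - destruct (Rlt_or_le T sq) as [h|h]; auto. unfold Dt in Hsq. nra.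
  - destruct (Rlt_or_le (-T) sq) as [h|h]; auto. unfold Dt in Hsq. nra. }
exists ((T - sq)/2), ((T + sq)/2). split; [lra|]. split; [lra|].
split; apply eig_real; unfold T, Dt in *; nra.
Qed.

Lemma endemic_to A r b a mu S I : 0 < a -> 0 < b -> 0 < mu -> 0 < r ->
  is_endemic_equilibrium A r b a mu S I ->
  0 < I /\ S = A - b*I /\
  b*b*I*I - (b*A - mu - b*b*a)*I + (r - (b*A - mu)*a) = 0.
Proof.
intros Ha Hb Hm Hr [[HS [HI [H1 H2]]] HI0].
assert (HIp : 0 < I) by lra.
unfold fS, fI in *.
assert (Hai : 0 < a + I) by lra.
assert (E : S = 0 \/ S = A - b*I).
{ assert (S * (A - S - b*I) = 0) by (rewrite <- H1; ring).
  apply Rmult_integral in H. destruct H; [left|right]; lra. }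
assert (H2' : I*((b*S - mu)*(a+I) - r) = 0).
{ transitivity ((b * I * S - mu * I - r * I / (a + I))*(a+I)).
  - field. lra.
  - rewrite H2. ring. }
apply Rmult_integral in H2'. destruct H2' as [h|h]; [lra|].
destruct E as [E|E].
- subst S. nra.
- split; auto. split; auto. subst S. nra.
Qed.

Lemma endemic_of A r b a mu S I : 0 < a -> 0 < b -> 0 < mu -> 0 < r ->
  0 < I -> S = A - b*I ->
  b*b*I*I - (b*A - mu - b*b*a)*I + (r - (b*A - mu)*a) = 0 ->
  is_endemic_equilibrium A r b a mu S I /\ 0 < S /\ (b*S - mu)*(a+I) = r.
Proof.
intros Ha Hb Hm Hr HI HS Q.
assert (Hai : 0 < a + I) by lra.
assert (E : (b*S - mu)*(a+I) = r) by (subst S; nra).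
assert (Hc : 0 < b*S - mu) by nra.
assert (HSp : 0 < S) by nra.
split; [|split; auto].
split; [|lra].
unfold is_equilibrium, fS, fI. split; [lra|]. split; [lra|]. split.
- subst S. ring.
- rewrite <- E. field. lra.
Qed.

Lemma quad_of k p q s I : 0 < k -> s*s = p*p - 4*k*q -> 2*k*I = p + s \/ 2*k*I = p - s ->
  k*I*I - p*I + q = 0.
Proof.
intros Hk Hs H.
assert (E : 4*k*(k*I*I - p*I + q) = (2*k*I)*(2*k*I) - 2*p*(2*k*I) + 4*k*q) by ring.
assert (E2 : (2*k*I)*(2*k*I) - 2*p*(2*k*I) + 4*k*q = 0) by (destruct H as [H|H]; rewrite H; nra).
rewrite E2 in E. apply Rmult_integral in E. destruct E; lra.
Qed.

Lemma quad_to k p q s I : 0 < k -> s*s = p*p - 4*k*q -> k*I*I - p*I + q = 0 ->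
  2*k*I = p + s \/ 2*k*I = p - s.
Proof.
intros Hk Hs H.
assert (E : (2*k*I - p - s)*(2*k*I - p + s) = 0) by nra.
apply Rmult_integral in E. destruct E; [left|right]; lra.
Qed.

Lemma sq_lt x c : 0 <= x -> 0 < c -> x*x < c*c -> x < c.
Proof. intros; nra. Qed.
Lemma sq_gt x c : 0 <= x -> 0 < c -> c*c < x*x -> c < x.
Proof. intros; nra. Qed.
Lemma pos_div m x y : 0 < m -> m*x = y -> 0 < y -> 0 < x.
Proof. intros; nra. Qed.
Lemma ub_div m x y m0 y0 : 0 < m0 -> m0 < m -> m*x = y -> y < y0 -> 0 < x -> x < y0/m0.
Proof. intros. apply Rmult_lt_reg_l with m0; auto. field_simplify; [|lra]. nra. Qed.

Lemma bI_lem A b I : 4.999 < A -> 0 < b < 1.001 -> 0 < I < 2.12 -> 2.8 < A - b*I.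
Proof. intros; nra. Qed.
Lemma trace_lem r a I S : r < 6.001 -> 0.999 < a -> 0 < I -> 2.8 < S -> r*I < S*((a+I)*(a+I)).
Proof. intros. assert (4*a*I <= (a+I)*(a+I)) by (assert (0 <= (a-I)*(a-I)) by apply Rle_0_sqr; nra).
  assert (r*I < 6.001*I) by (apply Rmult_lt_compat_r; lra).
  assert (6.001*I < 2.8*(4*a*I)) by nra. assert (2.8*(4*a*I) <= S*((a+I)*(a+I))) by nra. lra. Qed.

Lemma main_pt A r b a mu :
  4.999 < A < 5.001 -> 5.999 < r < 6.001 -> 0.999 < b < 1.001 ->
  0.999 < a < 1.001 -> 0.999 < mu < 1.001 ->
       basic_repro A r b a mu < 1 /\
       exists S1 I1 S2 I2 : R,
         (S1, I1) <> (S2, I2) /\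
         is_endemic_equilibrium A r b a mu S1 I1 /\
         is_endemic_equilibrium A r b a mu S2 I2 /\
         (forall S I, is_endemic_equilibrium A r b a mu S I ->
            (S, I) = (S1, I1) \/ (S, I) = (S2, I2)) /\
         is_sink A r b a mu S1 I1 /\
         is_saddle A r b a mu S2 I2.
Proof.
intros hA hr hb ha hm.
assert (hbA : 4.994 < b*A < 5.007) by nra.
assert (hk : 0.998 < b*b < 1.0021) by nra.
assert (hka : 0.997 < b*b*a < 1.0031) by nra.
assert (hp : 2.98 < b*A - mu - b*b*a < 3.02) by lra.
assert (hca : 3.98 < (b*A - mu)*a < 4.02) by nra.
assert (hq : 1.97 < r - (b*A - mu)*a < 2.03) by lra.
assert (hp2 : 8.88 < (b*A - mu - b*b*a)*(b*A - mu - b*b*a) < 9.13) by nra.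
assert (hkq : 7.86 < 4*(b*b)*(r - (b*A - mu)*a) < 8.14) by nra.
assert (hD : 0.7 < (b*A - mu - b*b*a)*(b*A - mu - b*b*a) - 4*(b*b)*(r - (b*A - mu)*a) < 1.3) by lra.
set (s := sqrt ((b*A - mu - b*b*a)*(b*A - mu - b*b*a) - 4*(b*b)*(r - (b*A - mu)*a))).
assert (hs2 : s*s = (b*A - mu - b*b*a)*(b*A - mu - b*b*a) - 4*(b*b)*(r - (b*A - mu)*a))
  by (apply sqrt_sqrt; lra).
assert (hs0 : 0 <= s) by apply sqrt_pos.
assert (hs : 0.8 < s < 1.2) by (split; [apply sq_gt|apply sq_lt]; lra).
clearbody s.
set (I1 := (b*A - mu - b*b*a + s)/(2*(b*b))).
set (I2 := (b*A - mu - b*b*a - s)/(2*(b*b))).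
assert (h1 : 2*(b*b)*I1 = b*A - mu - b*b*a + s) by (unfold I1; field; lra).
assert (h2 : 2*(b*b)*I2 = b*A - mu - b*b*a - s) by (unfold I2; field; lra).
clearbody I1 I2.
assert (hI1a : 0 < I1) by (apply (pos_div (2*(b*b)) I1 _ ltac:(lra) h1); lra).
assert (hI1b : I1 < 4.23/1.996) by (apply (ub_div (2*(b*b)) I1 _ 1.996 4.23 ltac:(lra) ltac:(lra) h1); lra).
assert (hI1 : 0 < I1 < 2.12) by lra.
assert (hI2 : 0 < I2) by (apply (pos_div (2*(b*b)) I2 _ ltac:(lra) h2); lra).
assert (Q1 := quad_of (b*b) _ _ _ I1 ltac:(lra) hs2 (or_introl h1)).
assert (Q2 := quad_of (b*b) _ _ _ I2 ltac:(lra) hs2 (or_intror h2)).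
destruct (endemic_of A r b a mu (A - b*I1) I1 ltac:(lra) ltac:(lra) ltac:(lra) ltac:(lra)
   ltac:(lra) eq_refl ltac:(rewrite <- Q1; ring)) as [E1 [S1p R1]].
destruct (endemic_of A r b a mu (A - b*I2) I2 ltac:(lra) ltac:(lra) ltac:(lra) ltac:(lra)
   ltac:(lra) eq_refl ltac:(rewrite <- Q2; ring)) as [E2 [S2p R2]].
split.
{ unfold basic_repro.
  assert (0 < mu + r/a) by (assert (0 < r/a) by (apply Rdiv_lt_0_compat; lra); lra).
  apply (Rmult_lt_reg_r (mu + r/a)); auto.
  unfold Rdiv. rewrite Rmult_assoc, Rinv_l by lra. 
  apply (Rmult_lt_reg_r a); [lra|].
  replace (1 * (mu + r * / a) * a) with (mu*a + r) by (field; lra).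
  lra. }
exists (A - b*I1), I1, (A - b*I2), I2.
split; [intro H; injection H; intros HI _; rewrite HI in h1; lra|].
split; [exact E1|]. split; [exact E2|].
split.
{ intros S I HE.
  destruct (endemic_to A r b a mu S I ltac:(lra) ltac:(lra) ltac:(lra) ltac:(lra) HE)
    as [HI [HS Q]].
  assert (Q' : b*b*I*I - (b*A - mu - b*b*a)*I + (r - (b*A - mu)*a) = 0) by exact Q.
  destruct (quad_to (b*b) _ _ _ I ltac:(lra) hs2 Q') as [H|H].
  - left. assert (I = I1) by (apply (Rmult_eq_reg_l (2*(b*b))); lra). subst. reflexivity.
  - right. assert (I = I2) by (apply (Rmult_eq_reg_l (2*(b*b))); lra). subst. reflexivity. }
split.
{ destruct (jac_at A r b a mu (A - b*I1) I1 ltac:(lra) ltac:(lra) eq_refl R1) as [T D].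
  unfold is_sink, jac_eigenvalue. intros l H. apply sink_gen in H; auto.
  - rewrite T.
    assert (hS : 2.8 < A - b*I1) by (apply bI_lem; lra).
    assert (Hai : 0 < a + I1) by lra.
    assert ((b*(A - b*I1) - mu)*I1/(a+I1) < A - b*I1); [|lra].
    apply (Rmult_lt_reg_r ((a+I1)*(a+I1))); [nra|].
    replace ((b * (A - b * I1) - mu) * I1 / (a + I1) * ((a + I1) * (a + I1)))
      with (((b * (A - b * I1) - mu) *(a+I1)) * I1) by (field; lra).
    rewrite R1. apply trace_lem; lra.
  - rewrite D. apply Rdiv_lt_0_compat; [|lra].
    rewrite h1. replace (b * A - mu - b * b * a + s - (b * A - mu - b * b * a)) with s by ring.
    apply Rmult_lt_0_compat; [|lra]. apply Rmult_lt_0_compat; lra. }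
{ destruct (jac_at A r b a mu (A - b*I2) I2 ltac:(lra) ltac:(lra) eq_refl R2) as [T D].
  unfold is_saddle, jac_eigenvalue. apply saddle_gen.
  rewrite D. 
  rewrite h2. replace (b * A - mu - b * b * a - s - (b * A - mu - b * b * a)) with (-s) by ring.
  assert (0 < (A - b*I2)*I2*s/(a+I2)).
  { apply Rdiv_lt_0_compat; [|lra]. apply Rmult_lt_0_compat; [|lra]. apply Rmult_lt_0_compat; lra. }
  replace ((A - b * I2) * I2 * - s / (a + I2)) with (-((A - b*I2)*I2*s/(a+I2))) by (field; lra).
  lra. }
Qed.

Definition Ubox (A r b a mu : R) : Prop :=
  Rabs (A - 5) < 0.001 /\ Rabs (r - 6) < 0.001 /\ Rabs (b - 1) < 0.001 /\
  Rabs (a - 1) < 0.001 /\ Rabs (mu - 1) < 0.001.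

Lemma near_lem x y c e : Rabs (x - c) + e <= 0.001 -> Rabs (y - x) < e -> Rabs (y - c) < 0.001.
Proof.
intros H1 H2. replace (y - c) with ((y - x) + (x - c)) by ring.
eapply Rle_lt_trans; [apply Rabs_triang|]. lra.
Qed.

Theorem theoremA :
  exists U : R -> R -> R -> R -> R -> Prop,
    open5 U /\
    (exists A r b a mu, U A r b a mu) /\
    (forall A r b a mu, U A r b a mu ->
       0 < A /\ 0 < r /\ 0 < b /\ 0 < a /\ 0 < mu) /\
    (forall A r b a mu, U A r b a mu ->
       basic_repro A r b a mu < 1 /\
       exists S1 I1 S2 I2 : R,
         (S1, I1) <> (S2, I2) /\
         is_endemic_equilibrium A r b a mu S1 I1 /\
         is_endemic_equilibrium A r b a mu S2 I2 /\
         (forall S I, is_endemic_equilibrium A r b a mu S I ->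
            (S, I) = (S1, I1) \/ (S, I) = (S2, I2)) /\
         is_sink A r b a mu S1 I1 /\
         is_saddle A r b a mu S2 I2).
Proof.
exists Ubox. split; [|split; [|split]].
- intros x1 x2 x3 x4 x5 [h1 [h2 [h3 [h4 h5]]]].
  set (e := Rmin (Rmin (Rmin (Rmin (0.001 - Rabs (x1 - 5)) (0.001 - Rabs (x2 - 6)))
             (0.001 - Rabs (x3 - 1))) (0.001 - Rabs (x4 - 1))) (0.001 - Rabs (x5 - 1))).
  assert (e1 : e <= 0.001 - Rabs (x1 - 5)).
  { unfold e. repeat (eapply Rle_trans; [apply Rmin_l|]). lra. }
  assert (e2 : e <= 0.001 - Rabs (x2 - 6)).
  { unfold e. eapply Rle_trans; [apply Rmin_l|]. eapply Rle_trans; [apply Rmin_l|].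
    eapply Rle_trans; [apply Rmin_l|]. apply Rmin_r. }
  assert (e3 : e <= 0.001 - Rabs (x3 - 1)).
  { unfold e. eapply Rle_trans; [apply Rmin_l|]. eapply Rle_trans; [apply Rmin_l|]. apply Rmin_r. }
  assert (e4 : e <= 0.001 - Rabs (x4 - 1)).
  { unfold e. eapply Rle_trans; [apply Rmin_l|]. apply Rmin_r. }
  assert (e5 : e <= 0.001 - Rabs (x5 - 1)) by (unfold e; apply Rmin_r).
  assert (ep : 0 < e).
  { unfold e. repeat apply Rmin_glb_lt; lra. }
  exists e. split; auto. intros y1 y2 y3 y4 y5 g1 g2 g3 g4 g5.
  repeat split; eapply near_lem; eauto; lra.
- exists 5, 6, 1, 1, 1. unfold Ubox.
  repeat split; rewrite Rminus_diag, Rabs_R0; lra.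
- intros A r b a mu [h1 [h2 [h3 [h4 h5]]]].
  apply Rabs_def2 in h1, h2, h3, h4, h5. lra.
- intros A r b a mu [h1 [h2 [h3 [h4 h5]]]].
  apply Rabs_def2 in h1, h2, h3, h4, h5. apply main_pt; lra.
Qed.
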